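(* Let $G$ be a connected bipartite graph with vertex set $\{u_1,\dots,u_n\}$ ($n\ge2$), let $H$ be a non-empty graph, and let $\mathcal{H}=\{H_1,\dots,H_n\}$ be a family of graphs such that $\mathcal{H}-\Phi=\{H\}$, i.e. exactly one graph of the family has an edge and it is $H$, all others being edgeless. Then $\dim_l(G\circ\mathcal{H})=\operatorname{adim}_l(H)+1$ if $H\in\mathcal{G}$, and $\dim_l(G\circ\mathcal{H})=\operatorname{adim}_l(H)$ otherwise.
   Context: All graphs are finite and simple with at least one vertex; a non-empty graph is one with at least one edge; $\Phi$ is the class of edgeless graphs. $d_G$ is shortest-path distance ($+\infty$ between components), $d_{G,2}=\min\{d_G,2\}$; $s$ distinguishes $x,y$ w.r.t. $d$ if $d(s,x)\ne d(s,y)$. $\dim_l(G)$: minimum size of $S\subseteq V(G)$ such that any two adjacent vertices are distinguished w.r.t. $d_G$ by some vertex of $S$. $\operatorname{adim}_l(H)$: minimum size of $S\subseteq V(H)$ such that any two adjacent vertices are distinguished w.r.t. $d_{H,2}$ by some vertex of $S$; minimum such sets are local adjacency bases. $\mathcal{G}$: class of graphs $H$ such that every local adjacency basis $B$ of $H$ satisfies $B\subseteq N_H(v)$ for some $v\in V(H)$. Lexicographic product $G\circ\mathcal{H}$: vertex set $\bigcup_i\{u_i\}\times V(H_i)$, $(u_i,v)\sim(u_j,w)$ iff $u_iu_j\in E(G)$, or $i=j$ and $vw\in E(H_i)$. *)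

(* Defs.v *)
From mathcomp Require Import all_boot.
Set Implicit Arguments. Unset Strict Implicit. Unset Printing Implicit Defensive.

Definition simple_graph (T : finType) (e : rel T) : Prop :=
  symmetric e /\ irreflexive e.

Definition nonempty_graph (T : finType) (e : rel T) : Prop :=
  exists x y, e x y.

Fixpoint walk (T : finType) (e : rel T) (k : nat) (x y : T) : bool :=
  match k with
  | 0 => x == y
  | k'.+1 => [exists z, e x z && walk e k' z y]
  end.

(* Shortest-path distance; None encodes +infinity. A shortest walk is a path,
   hence has fewer than #|T| edges, so searching k < #|T| suffices. *)
Definition dist (T : finType) (e : rel T) (x y : T) : option nat :=
  let k := find (fun k => walk e k x y) (iota 0 #|T|) in
  if k < #|T| then Some k else None.

Definition dist2 (T : finType) (e : rel T) (x y : T) : nat :=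
  match dist e x y with Some k => minn k 2 | None => 2 end.

Definition local_metric_gen (T : finType) (e : rel T) (S : {set T}) : bool :=
  [forall x, forall y, e x y ==> [exists s in S, dist e s x != dist e s y]].

Definition local_adj_gen (T : finType) (e : rel T) (S : {set T}) : bool :=
  [forall x, forall y, e x y ==> [exists s in S, dist2 e s x != dist2 e s y]].

(* minimum cardinalities (setT is always a generator, used as default) *)
Definition ldim (T : finType) (e : rel T) : nat :=
  #|[arg min_(S < [set: T] | local_metric_gen e S) #|S|]|.

Definition ladim (T : finType) (e : rel T) : nat :=
  #|[arg min_(S < [set: T] | local_adj_gen e S) #|S|]|.

Definition local_adj_basis (T : finType) (e : rel T) (B : {set T}) : Prop :=
  local_adj_gen e B /\ #|B| = ladim e.

Definition open_nbhd (T : finType) (e : rel T) (v : T) : {set T} :=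
  [set w | e v w].

Definition classG (T : finType) (e : rel T) : Prop :=
  forall B : {set T}, local_adj_basis e B -> exists v, B \subset open_nbhd e v.

Definition connected_graph (T : finType) (e : rel T) : Prop :=
  forall x y, connect e x y.

Definition bipartite (T : finType) (e : rel T) : Prop :=
  exists f : T -> bool, forall x y, e x y -> f x != f y.

Definition lexprod (n : nat) (G : rel 'I_n) (V : 'I_n -> finType)
  (E : forall i, rel (V i)) : rel {i : 'I_n & V i} :=
  fun x y => G (tag x) (tag y) ||
             ((tag x == tag y) && E (tag x) (tagged x) (tagged_as x y)).

(* Main.v *)
Require Import Defs.
From mathcomp Require Import all_boot.
From Stdlib Require Import Classical.
Set Implicit Arguments. Unset Strict Implicit. Unset Printing Implicit Defensive.

Section Generic.
Variables (T : finType) (e : rel T).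

Lemma walk_path x p : path e x p -> walk e (size p) x (last x p).
Proof.
elim: p x => [|y p IH] x /=; first by rewrite eqxx.
case/andP=> exy pth; apply/existsP; exists y; rewrite exy /=; exact: IH.
Qed.

Lemma walk_connect k x y : walk e k x y -> connect e x y.
Proof.
elim: k x => [|k IH] x /=; first by move/eqP->.
case/existsP=> z /andP[exz wz]; apply: connect_trans (connect1 exz) (IH _ wz).
Qed.

Lemma connect_walk x y : connect e x y -> exists2 m, m < #|T| & walk e m x y.
Proof.
case/connectP=> p pth ->.
case/shortenP: pth => p' pth' up' _.
exists (size p'); last exact: walk_path.
have := max_card (mem (x :: p')); rewrite (card_uniqP up') /=; done.
Qed.

Lemma dist_lt x y m : dist e x y = Some m -> m < #|T|.
Proof. by rewrite /dist; case: ifP => // lt [<-]. Qed.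

Lemma dist_someP x y m : dist e x y = Some m ->
  walk e m x y /\ forall k, k < m -> ~~ walk e k x y.
Proof.
rewrite /dist; set f := find _ _; case: ifP => // lt [<-]; split.
  have := @nth_find _ 0 (fun k => walk e k x y) (iota 0 #|T|).
  rewrite -/f nth_iota ?add0n //; apply.
  by rewrite has_find size_iota.
move=> k lk; have := @before_find _ 0 (fun k => walk e k x y) (iota 0 #|T|) k lk.
by rewrite nth_iota ?add0n // => [->|]; last exact: ltn_trans lk lt.
Qed.

Lemma dist_noneP x y : dist e x y = None -> forall k, k < #|T| -> ~~ walk e k x y.
Proof.
rewrite /dist; set f := find _ _; case: ifP => // lt _ k lk.
have lkf : k < f by apply: leq_trans lk _; rewrite leqNgt lt.
have := @before_find _ 0 (fun k => walk e k x y) (iota 0 #|T|) k lkf.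
by rewrite nth_iota ?add0n // => ->.
Qed.

Lemma dist_le x y m : walk e m x y -> m < #|T| -> exists2 m', dist e x y = Some m' & m' <= m.
Proof.
move=> w lm; rewrite /dist; set f := find _ _.
have lf : f <= m.
  rewrite leqNgt; apply/negP=> lmf.
  have := @before_find _ 0 (fun k => walk e k x y) (iota 0 #|T|) m lmf.
  by rewrite nth_iota ?add0n // w.
by exists f => //; rewrite (leq_ltn_trans lf lm).
Qed.

Lemma dist_refl x : dist e x x = Some 0.
Proof.
have [m' -> ] := @dist_le x x 0 (eqxx x) (introT card_gt0P (ex_intro _ x isT)).
by rewrite leqn0 => /eqP->.
Qed.

Lemma dist0 x y : dist e x y = Some 0 -> x = y.
Proof. by case/dist_someP => /= /eqP. Qed.

Hypothesis irr : irreflexive e.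

Lemma card2 (x y : T) : x != y -> 1 < #|T|.
Proof.
move=> xy; have := max_card (mem [:: x; y]).
by rewrite (card_uniqP _) //= inE xy.
Qed.

Lemma card3 (x y z : T) : x != y -> x != z -> y != z -> 2 < #|T|.
Proof.
move=> xy xz yz; have := max_card (mem [:: x; y; z]).
by rewrite (card_uniqP _) //= !inE negb_or xy xz yz.
Qed.

Lemma neq_edge x y : e x y -> x != y.
Proof. by apply: contraTneq => ->; rewrite irr. Qed.

Lemma walk1 x y : walk e 1 x y = e x y.
Proof.
apply/existsP/idP => [[z /andP[exz /eqP <-]] //|exy].
by exists y; rewrite exy eqxx.
Qed.

Lemma dist1 x y : e x y -> dist e x y = Some 1.
Proof.
move=> exy; have xy := neq_edge exy.
have w : walk e 1 x y by rewrite walk1.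
have [m' dm lm] := @dist_le x y 1 w (card2 xy).
rewrite dm; case: m' dm lm => [|[|]] // /dist0 exy' _.
by rewrite exy' eqxx in xy.
Qed.

Lemma dist1E x y : dist e x y = Some 1 -> e x y.
Proof. by case/dist_someP; rewrite walk1. Qed.

Lemma dist_2 x y z : x != y -> ~~ e x y -> e x z -> e z y -> dist e x y = Some 2.
Proof.
move=> xy nxy exz ezy.
have w2 : walk e 2 x y.
  apply/existsP; exists z; rewrite exz /=; move: ezy; rewrite -walk1; exact.
have zy := neq_edge ezy; rewrite eq_sym in zy.
have [m' dm lm] := @dist_le x y 2 w2 (card3 xy (neq_edge exz) zy).
rewrite dm; case: m' dm lm => [|[|[|]]] // dm _.
  by move/dist0: dm xy => ->; rewrite eqxx.
by move/dist1E: dm nxy => ->.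
Qed.

Lemma dist2_val x y : dist2 e x y = if x == y then 0 else if e x y then 1 else 2.
Proof.
case: eqP => [->|xy]; first by rewrite /dist2 dist_refl.
case: ifP => exy; first by rewrite /dist2 dist1.
rewrite /dist2; case dm: (dist e x y) => [m|] //.
case: m dm => [|[|m]] // dm.
  by move/dist0: dm.
by move/dist1E: dm; rewrite exy.
Qed.

End Generic.

Lemma dist_dom1 (T : finType) (e : rel T) x y x' y' :
  (forall k, walk e k x y -> exists2 k', k' <= k & walk e k' x' y') ->
  forall m, dist e x y = Some m -> exists2 m', dist e x' y' = Some m' & m' <= m.
Proof.
move=> D m dm; have lt := dist_lt dm; case/dist_someP: dm => w _.
have [k' lk w'] := D m w.
have [m' dm' lm'] := dist_le w' (leq_ltn_trans lk lt).
by exists m' => //; apply: leq_trans lm' lk.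
Qed.

Lemma dist_dom (T : finType) (e : rel T) x y x' y' :
  (forall k, walk e k x y -> exists2 k', k' <= k & walk e k' x' y') ->
  (forall k, walk e k x' y' -> exists2 k', k' <= k & walk e k' x y) ->
  dist e x y = dist e x' y'.
Proof.
move=> D1 D2.
case d1: (dist e x y) => [m|]; case d2: (dist e x' y') => [m'|] //.
- have [m1 d1' l1] := dist_dom1 D1 d1.
  have [m2 d2' l2] := dist_dom1 D2 d2.
  rewrite d2 in d1'; rewrite d1 in d2'.
  case: d1' => e1; case: d2' => e2; subst m1 m2.
  by rewrite (@anti_leq m m') // l1 l2.
- by have [m1 ] := dist_dom1 D1 d1; rewrite d2.
- by have [m1 ] := dist_dom1 D2 d2; rewrite d1.
Qed.


Unset Implicit Arguments.
Section Lex.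
Variables (n : nat) (G : rel 'I_n) (V : 'I_n -> finType) (E : forall i, rel (V i)).
Hypothesis symG : symmetric G.
Hypothesis irrG : irreflexive G.
Hypothesis irrE : forall i : 'I_n, irreflexive (E i).
Hypothesis neV : forall i : 'I_n, 0 < #|V i|.

Set Implicit Arguments.
Local Notation P := (lexprod G E).
Local Notation mk i a := (@Tagged _ i V a).

Lemma pickV i : exists c : V i, true.
Proof. by have /card_gt0P [c _] := neV i; exists c. Qed.

Lemma lex_same i (a b : V i) : P (mk i a) (mk i b) = E i a b.
Proof. by rewrite /lexprod /= irrG eqxx /= tagged_asE. Qed.

Lemma lex_diff i k (a : V i) (b : V k) : i != k -> P (mk i a) (mk k b) = G i k.
Proof. by move=> ik; rewrite /lexprod /= (negbTE ik) orbF. Qed.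

Lemma lex_tag (x y : {i : 'I_n & V i}) : G (tag x) (tag y) -> P x y.
Proof. by rewrite /lexprod => ->. Qed.

Lemma lex_irr : irreflexive P.
Proof. by case=> i a; rewrite lex_same irrE. Qed.

Lemma mk_inj i : injective (fun a : V i => mk i a).
Proof.
move=> a b eab.
have := tagged_asE (u := mk i a) b.
by rewrite -eab tagged_asE.
Qed.

Lemma lift m l i x a : 0 < m -> walk G m l i -> walk P m (mk l x) (mk i a).
Proof.
elim: m l x => [|m IH] l x // _ /existsP [z /andP [glz wz]].
apply/existsP; case: m IH wz => [|m] IH wz.
  by exists (mk i a); rewrite eqxx andbT; apply: lex_tag; rewrite /= -(eqP wz).
have [c _] := pickV z.
by exists (mk z c); rewrite lex_tag //=; apply: IH.
Qed.

Lemma proj m l x y : walk P m (mk l x) y -> exists2 m', m' <= m & walk G m' l (tag y).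
Proof.
elim: m l x => [|m IH] l x /=.
  by move/eqP <-; exists 0 => //=.
case/existsP=> [[z c]] /andP [pz wz].
have [m' lm' w'] := IH _ _ wz.
move: pz; rewrite /lexprod /=; case/orP => [glz | /andP [/eqP lz _]].
  by exists m'.+1 => //; apply/existsP; exists z; rewrite glz.
by subst z; exists m' => //; apply: leqW.
Qed.

Lemma dist_cross l i (x x' : V l) (a a' : V i) : l != i ->
  dist P (mk l x) (mk i a) = dist P (mk l x') (mk i a').
Proof.
move=> li; apply: dist_dom => k /proj /= [k' lk w]; exists k' => //;
  apply: lift => //; case: k' w {lk} => //= /eqP lie; by rewrite lie eqxx in li.
Qed.

Lemma dist_cross_walk l i (x : V l) (a : V i) m : l != i ->
  dist P (mk l x) (mk i a) = Some m -> walk G m l i.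
Proof.
move=> li /dist_someP [w minw].
have [k' lk w'] := proj w.
have k'0 : 0 < k' by case: k' w' {lk} => //= /eqP lie; rewrite lie eqxx in li.
case: (ltngtP k' m) lk => [lkm _|//|<- //].
by have := minw _ lkm; rewrite (lift x a k'0 w').
Qed.

Hypothesis conG : connected_graph G.

Lemma dist_cross_some l i (x : V l) (a : V i) : l != i ->
  exists m, dist P (mk l x) (mk i a) = Some m.
Proof.
move=> li; have [m _ w] := connect_walk (conG l i).
have m0 : 0 < m by case: m w => //= /eqP lie; rewrite lie eqxx in li.
have /connect_walk [m1 lm1 w1] := walk_connect (lift x a m0 w).
by have [m2 -> _] := dist_le w1 lm1; exists m2.
Qed.

Hypothesis n2 : 1 < n.

Lemma nbr i : exists k, G i k.
Proof.
have [i' ii'] : exists i', i != i'.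
  case: (eqVneq (val i) 0) => i0.
    by exists (Ordinal n2); apply/eqP => /(congr1 val) /=; rewrite i0.
  by exists (Ordinal (ltn_trans (ltnSn 0) n2)); apply/eqP => /(congr1 val) /=; apply/eqP.
have [m _ w] := connect_walk (conG i i').
case: m w => [/= /eqP eii|m /existsP [z /andP [giz _]]]; first by rewrite eii eqxx in ii'.
by exists z.
Qed.

Lemma fiberdist i (x a : V i) : dist P (mk i x) (mk i a) = Some (dist2 (E i) x a).
Proof.
rewrite dist2_val //; case: eqP => [->|xa]; first exact: dist_refl.
case: ifP => exa; first by apply: dist1 => //; [exact: lex_irr | rewrite lex_same].
have [k gik] := nbr i; have [c _] := pickV k.
have ik : i != k by apply: contraTneq gik => ->; rewrite irrG.
apply: (dist_2 lex_irr (z := mk k c)).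
- by apply/negP => /eqP /mk_inj.
- by rewrite lex_same exa.
- by rewrite lex_diff.
- by rewrite lex_diff 1?eq_sym // symG.
Qed.

Hypothesis (f : 'I_n -> bool) (bipf : forall x y, G x y -> f x != f y).

Lemma parity m l i : walk G m l i -> f i = odd m (+) f l.
Proof.
elim: m l => [|m IH] l /=; first by move/eqP ->.
case/existsP=> z /andP [glz /IH ->]; move: (bipf glz).
by case: (f l); case: (f z); case: (odd m).
Qed.

Lemma distinguish i k (a : V i) (b : V k) s : G i k ->
  (tag s != i /\ tag s != k) \/ (tag s = i /\ ~~ P s (mk i a)) \/
  (tag s = k /\ ~~ P s (mk k b)) ->
  dist P s (mk i a) != dist P s (mk k b).
Proof.
move=> gik; case: s => l x /=.
case=> [[li lk] | [[li nP] | [lk nP]]].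
- have [m dm] := dist_cross_some x a li.
  rewrite dm; apply/eqP=> dm'.
  have w1 := dist_cross_walk li dm; have w2 := dist_cross_walk lk (esym dm').
  move: (bipf gik); rewrite (parity w1) (parity w2) eqxx; done.
- subst l; rewrite (@dist1 _ _ lex_irr _ (mk k b)); last by rewrite lex_tag.
  by apply/eqP => /(dist1E) ; rewrite (negbTE nP).
- subst l; rewrite (@dist1 _ _ lex_irr _ (mk i a)); last by rewrite lex_tag //= symG.
  by apply/eqP => /esym /(dist1E) ; rewrite (negbTE nP).
Qed.



Hypothesis symE : forall i : 'I_n, symmetric (E i).
Variable j : 'I_n.
Hypothesis neEj : nonempty_graph (E j).
Hypothesis emptyE : forall i : 'I_n, i != j -> ~ nonempty_graph (E i).

Lemma no_edge i (a b : V i) : i != j -> ~~ E i a b.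
Proof. by move=> ij; apply/negP => eab; apply: (emptyE ij); exists a, b. Qed.

Lemma metric_T : local_metric_gen P [set: {i : 'I_n & V i}].
Proof.
apply/forallP => x; apply/forallP => y; apply/implyP => pxy.
apply/existsP; exists x; rewrite inE dist_refl /=; apply/eqP => /esym /dist0 xy.
by rewrite xy lex_irr in pxy.
Qed.

Lemma adj_T : local_adj_gen (E j) [set: V j].
Proof.
apply/forallP => x; apply/forallP => y; apply/implyP => pxy.
apply/existsP; exists x; rewrite inE !dist2_val // eqxx pxy.
case: (eqVneq x y) => [xy|//]; by rewrite xy irrE in pxy.
Qed.

Lemma ldim_min S : local_metric_gen P S -> ldim P <= #|S|.
Proof. by rewrite /ldim; case: arg_minnP => [|S0 _ min]; [exact: metric_T | exact: min]. Qed.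

Lemma ldim_ex : exists S, local_metric_gen P S /\ #|S| = ldim P.
Proof. by rewrite /ldim; case: arg_minnP => [|S0 g _]; [exact: metric_T | exists S0]. Qed.

Lemma ladim_min S : local_adj_gen (E j) S -> ladim (E j) <= #|S|.
Proof. by rewrite /ladim; case: arg_minnP => [|S0 _ min]; [exact: adj_T | exact: min]. Qed.

Lemma ladim_ex : exists S, local_adj_gen (E j) S /\ #|S| = ladim (E j).
Proof. by rewrite /ladim; case: arg_minnP => [|S0 g _]; [exact: adj_T | exists S0]. Qed.

Definition proj_set (S : {set {i : 'I_n & V i}}) : {set V j} := [set a | mk j a \in S].

Lemma proj_gen (S : {set {i : 'I_n & V i}}) : local_metric_gen P S -> local_adj_gen (E j) (proj_set S).
Proof.
move=> gS; apply/forallP => v; apply/forallP => w; apply/implyP => evw.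
have pvw : P (mk j v) (mk j w) by rewrite lex_same.
move: gS => /forallP/(_ (mk j v))/forallP/(_ (mk j w))/implyP/(_ pvw)/existsP [s /andP [sS ds]].
move: sS ds; case: s => l x sS ds.
case: (eqVneq l j) => [lj|lj].
  subst l; rewrite !fiberdist in ds.
  apply/existsP; exists x; rewrite inE sS /=.
  by apply: contra ds => /eqP ->.
by rewrite (dist_cross x x v w lj) eqxx in ds.
Qed.

Lemma proj_card (S : {set {i : 'I_n & V i}}) : #|proj_set S| <= #|S|.
Proof.
rewrite -(card_imset _ (@mk_inj j)); apply: subset_leq_card.
by apply/subsetP => x /imsetP [a]; rewrite inE => aS ->.
Qed.

Lemma gen_crit (B : {set V j}) (S : {set {i : 'I_n & V i}}) :
  local_adj_gen (E j) B ->
  (forall b, b \in B -> mk j b \in S) ->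
  (forall i k (a : V i) (b : V k), G i k -> exists2 s, s \in S &
     (tag s != i /\ tag s != k) \/ (tag s = i /\ ~~ P s (mk i a)) \/
     (tag s = k /\ ~~ P s (mk k b))) ->
  local_metric_gen P S.
Proof.
move=> gB BS cross.
apply/forallP => [[i a]]; apply/forallP => [[k b]]; apply/implyP.
rewrite /lexprod /=; case/orP => [gik | /andP [/eqP ik Ei]].
  have [s sS cs] := cross _ _ a b gik.
  by apply/existsP; exists s; rewrite sS /=; apply: distinguish.
subst k; rewrite tagged_asE in Ei.
case: (eqVneq i j) => ij; last by rewrite (negbTE (no_edge a b ij)) in Ei.
subst i.
move: gB => /forallP/(_ a)/forallP/(_ b)/implyP/(_ Ei)/existsP [b0 /andP [b0B db]].
apply/existsP; exists (mk j b0); rewrite BS //= !fiberdist.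
by apply: contra db => /eqP [->].
Qed.

Lemma B_nonempty (B : {set V j}) : local_adj_gen (E j) B -> exists b, b \in B.
Proof.
case: neEj => v [w evw].
move/forallP/(_ v)/forallP/(_ w)/implyP/(_ evw)/existsP => - [b /andP [bB _]].
by exists b.
Qed.

Lemma lower : ladim (E j) <= ldim P.
Proof.
have [S [gS <-]] := ldim_ex.
exact: leq_trans (ladim_min (proj_gen gS)) (proj_card S).
Qed.

Lemma upper_nonG (B : {set V j}) : local_adj_gen (E j) B ->
  (forall v, ~ B \subset open_nbhd (E j) v) -> ldim P <= #|B|.
Proof.
move=> gB nsub.
have [b1 b1B] := B_nonempty gB.
apply: leq_trans (ldim_min (S := [set mk j b | b in B]) _) (leq_imset_card _ _).
apply: (gen_crit gB) => [b bB|i k a b gik]; first by apply/imsetP; exists b.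
case: (eqVneq i j) => [ij|ij].
  subst i.
  have /subsetPn [b0 b0B nb0] : ~~ (B \subset open_nbhd (E j) a) by apply/negP; apply: nsub.
  exists (mk j b0); first by apply/imsetP; exists b0.
  by right; left; split => //; rewrite lex_same symE; rewrite inE in nb0.
case: (eqVneq k j) => [kj|kj].
  subst k.
  have /subsetPn [b0 b0B nb0] : ~~ (B \subset open_nbhd (E j) b) by apply/negP; apply: nsub.
  exists (mk j b0); first by apply/imsetP; exists b0.
  by right; right; split => //; rewrite lex_same symE; rewrite inE in nb0.
exists (mk j b1); first by apply/imsetP; exists b1.
by left; split => //=; rewrite eq_sym.
Qed.

Lemma upper_G : ldim P <= (ladim (E j)).+1.
Proof.
have [B [gB cB]] := ladim_ex.
have [b1 b1B] := B_nonempty gB.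
have [k0 gjk0] := nbr j; have [c _] := pickV k0.
have jk0 : j != k0 by apply: contraTneq gjk0 => <-; rewrite irrG.
set S := mk k0 c |: [set mk j b | b in B].
apply: leq_trans (ldim_min (S := S) _) _; last first.
  rewrite cardsU1 -cB addnC -addn1; apply: leq_add; first exact: leq_imset_card.
  by case: (_ \notin _).
apply: (gen_crit gB) => [b bB|i k a b gik].
  by rewrite !inE; apply/orP; right; apply/imsetP; exists b.
case: (eqVneq i j) => [ij|ij].
  subst i; exists (mk k0 c); first by rewrite !inE eqxx.
  case: (eqVneq k0 k) => [k0k|k0k].
    subst k; right; right; split => //; rewrite lex_same no_edge //.
    by rewrite eq_sym.
  by left; split => //=; rewrite eq_sym.
case: (eqVneq k j) => [kj|kj].
  subst k; exists (mk k0 c); first by rewrite !inE eqxx.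
  case: (eqVneq k0 i) => [k0i|k0i].
    subst i; right; left; split => //; rewrite lex_same no_edge //.
  by left; split => //=; rewrite eq_sym.
exists (mk j b1); first by rewrite !inE; apply/orP; right; apply/imsetP; exists b1.
by left; split => //=; rewrite eq_sym.
Qed.

Lemma lower_G : classG (E j) -> (ladim (E j)) < ldim P.
Proof.
move=> cG; rewrite ltnNge; apply/negP => le.
have [S [gS cS]] := ldim_ex.
set B := proj_set S.
have gB := proj_gen gS.
have cBS := proj_card S.
have cB : #|B| = ladim (E j).
  apply/eqP; rewrite eqn_leq ladim_min // andbT; rewrite -cS in le; exact: leq_trans cBS le.
have [v sub] := cG B (conj gB cB).
have IS : [set mk j b | b in B] = S.
  apply/eqP; rewrite eqEcard; apply/andP; split.
    by apply/subsetP => x /imsetP [a]; rewrite inE => aS ->.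
  rewrite card_imset; [by rewrite cB cS | exact: mk_inj].
have [k0 gjk0] := nbr j; have [c _] := pickV k0.
have jk0 : j != k0 by apply: contraTneq gjk0 => <-; rewrite irrG.
have pe : P (mk j v) (mk k0 c) by rewrite lex_diff.
move: gS => /forallP/(_ (mk j v))/forallP/(_ (mk k0 c))/implyP/(_ pe)/existsP [s /andP [sS ds]].
rewrite -IS in sS; case/imsetP: sS => x xB sx; subst s.
have evx : E j v x by move/subsetP: sub => /(_ x xB); rewrite inE.
rewrite (@dist1 _ _ lex_irr _ (mk j v)) ?(@dist1 _ _ lex_irr _ (mk k0 c)) in ds.
- by rewrite eqxx in ds.
- by rewrite lex_diff.
- by rewrite lex_same symE.
Qed.

Lemma main_thm :
  (classG (E j) -> ldim P = (ladim (E j)).+1) /\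
  (~ classG (E j) -> ldim P = ladim (E j)).
Proof.
split=> [cG | ncG]; first by apply/eqP; rewrite eqn_leq upper_G lower_G.
have [B [[gB cB] nsub]] : exists B, local_adj_basis (E j) B /\
    (forall v, ~ B \subset open_nbhd (E j) v).
  apply: NNPP => H; apply: ncG => B bB.
  apply: NNPP => nex; apply: H; exists B; split => // v sv; apply: nex; by exists v.
by apply/eqP; rewrite eqn_leq lower andbT -cB upper_nonG.
Qed.

End Lex.

Theorem corollary4 (n : nat) (G : rel 'I_n) (V : 'I_n -> finType)
  (E : forall i, rel (V i)) (j : 'I_n) :
  2 <= n ->
  simple_graph G -> connected_graph G -> bipartite G ->
  (forall i, simple_graph (E i)) ->
  (forall i, 0 < #|V i|) ->
  nonempty_graph (E j) ->
  (forall i, i != j -> ~ nonempty_graph (E i)) ->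
  (classG (E j) -> ldim (lexprod G E) = (ladim (E j)).+1) /\
  (~ classG (E j) -> ldim (lexprod G E) = ladim (E j)).
Proof.
move=> n2 [symG irrG] conG [f bipf] sE neV neEj emptyE.
have symE : forall i, symmetric (E i) by move=> i; case: (sE i).
have irrE : forall i, irreflexive (E i) by move=> i; case: (sE i).
exact: (@main_thm n G V E symG irrG irrE neV conG n2 f bipf symE j neEj emptyE).
Qed.
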